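(* Let $n$ be a positive integer, $p$ a prime number, $I$ an infinite set, and $R=\prod_{i\in I}\mathbb Z/np^2\mathbb Z$. There exists a $3\times3$ matrix with entries in $R$ that is partition regular over $R$ but does not satisfy the generalised columns condition.
   Context: A $k\times l$ matrix $\mathbf A$ over $R$ is partition regular over $R$ if for every $r\ge1$ and every map $\chi\colon R\to\{1,\dots,r\}$ there is a nonzero $\mathbf x\in R^l$ with $\mathbf A\mathbf x=0$ and all entries of $\mathbf x$ of the same colour. With columns $\mathbf c_1,\dots,\mathbf c_l$, $\mathbf A$ satisfies the generalised columns condition if there exist $m\ge0$, a partition $\{1,\dots,l\}=I_0\cup\dots\cup I_m$ and $d_0,\dots,d_m\in R\setminus\{0\}$ with (i) $d_0\sum_{i\in I_0}\mathbf c_i=0$; (ii) for $1\le t\le m$, $d_t\sum_{i\in I_t}\mathbf c_i$ lies in the $R$-submodule generated by the $\mathbf c_j$ with $j\in I_0\cup\dots\cup I_{t-1}$; (iii) if $m>0$, the ideal $d_0(d_1\cdots d_m)^nR$ is infinite for every $n\ge0$. *)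

(* Defs.v *)
From HB Require Import structures.
From mathcomp Require Import all_boot all_order all_algebra.
From mathcomp Require Import boolp classical_sets functions cardinality.
Set Implicit Arguments. Unset Strict Implicit. Unset Printing Implicit Defensive.
Import Order.TTheory GRing.Theory.
Local Open Scope ring_scope.
Local Open Scope classical_set_scope.

Definition partition_regular (R : comPzRingType) (k l : nat) (A : 'M[R]_(k, l)) :=
  forall (r : nat), (0 < r)%N -> forall chi : R -> 'I_r,
    exists x : 'cV[R]_l, [/\ x != 0, A *m x = 0 &
      exists c : 'I_r, forall i : 'I_l, chi (x i ord0) = c].

(* The partition {1..l} = I_0 u ... u I_m is
   encoded by f : 'I_l -> 'I_m.+1 (I_t = f^-1(t)); the parts are nonempty
   (f surjective).  The R-submodule generated by columns c_j is written out
   as the set of R-linear combinations of those columns. *)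
Definition gen_columns_condition (R : comPzRingType) (k l : nat) (A : 'M[R]_(k, l)) :=
  exists (m : nat) (f : 'I_l -> 'I_m.+1) (d : 'I_m.+1 -> R),
    [/\ forall t : 'I_m.+1, exists i : 'I_l, f i = t,
        forall t : 'I_m.+1, d t != 0,
        d ord0 *: (\sum_(i | f i == ord0) col i A) = 0,
        forall t : 'I_m.+1, (0 < t)%N ->
          exists a : 'I_l -> R,
            d t *: (\sum_(i | f i == t) col i A) =
              \sum_(j | (f j < t)%N) a j *: col j A
      & (0 < m)%N -> forall n : nat,
          infinite_set (range (fun r : R =>
             d ord0 * (\prod_(t : 'I_m.+1 | (0 < t)%N) d t) ^+ n * r))].

Definition prodZ (I : Type) (m : nat) := I -> 'Z_m.
HB.instance Definition _ (I : Type) (m : nat) := GRing.ComPzRing.on (prodZ I m).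

(* Main.v *)
Require Import Defs.
From mathcomp Require Import all_boot all_order all_algebra.
From mathcomp Require Import boolp classical_sets functions cardinality.
From mathcomp Require Import zify ring.
Local Open Scope classical_set_scope.
Import GRing.Theory.
Fixpoint Rb (k : nat) : nat := if k is k'.+1 then k'.+1 * Rb k' + 1 else 2.

Lemma Rb_gt0 k : 0 < Rb k.
Proof. elim: k => //= k IH; lia. Qed.

Lemma php (h : nat -> nat) K : forall C t, (forall w, w \in t -> h w \in C) ->
  size C * K < size t -> exists2 c, c \in C & K < count (fun w => h w == c) t.
Proof.
elim=> [|c C IH] t Ht Hs.
  by case: t Ht Hs => // w t /(_ w (mem_head _ _)).
case: (ltnP K (count (fun w => h w == c) t)) => Hc; first by exists c; rewrite ?mem_head.
set t' := filter (predC (fun w => h w == c)) t.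
have Ht' : forall w, w \in t' -> h w \in C.
  move=> w; rewrite mem_filter /= => /andP[Hn /Ht]; rewrite in_cons.
  by rewrite (negbTE Hn).
have Hsz : size C * K < size t'.
  rewrite size_filter.
  have := count_predC (fun w => h w == c) t.
  move: Hs => /=. rewrite mulSn. lia.
have [c' Hc' Hk] := IH t' Ht' Hsz.
exists c'; first by rewrite in_cons Hc' orbT.
apply: (leq_trans Hk).
rewrite /t' count_filter; apply: sub_count => w /= /andP[]; done.
Qed.

Lemma ramsey (col : nat -> nat -> nat) k : forall C s, size C <= k -> sorted ltn s ->
  Rb k <= size s -> (forall a b, a \in s -> b \in s -> a < b -> col a b \in C) ->
  exists a b c, [/\ a < b, b < c, col a b = col a c & col a c = col b c].
Proof.
elim: k => [|k IH] C s.
  rewrite leqn0 => /nilP ->.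
  case: s => [|a [|b s]] //= /andP[Hab _] _ /(_ a b).
  by rewrite !in_cons !eqxx orbT => /(_ isT isT Hab).
move=> HC; case: s => [|v t] /=; first by move=> _; rewrite addn1.
move=> Hp Hsz Hcol.
have Hvt : all (ltn v) t := order_path_min ltn_trans Hp.
have Hcv : forall w, w \in t -> col v w \in C.
  move=> w Hw; apply: Hcol; rewrite ?mem_head ?in_cons ?Hw ?orbT //.
  exact: (allP Hvt).
have Hsz2 : size C * (Rb k).-1 < size t.
  have := Rb_gt0 k; move: Hsz HC; nia.
have [c HcC Hc] := @php (col v) _ _ _ Hcv Hsz2.
set u := filter (fun w => col v w == c) t.
have Hu : forall w, w \in u -> (w \in t) && (col v w == c).
  by move=> w; rewrite mem_filter andbC.
case: (pselect (exists a b, [/\ a \in u, b \in u, a < b & col a b = c])).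
  move=> [a [b [Ha Hb Hab Habc]]].
  move: (Hu a Ha) (Hu b Hb) => /andP[Hat /eqP Hva] /andP[Hbt /eqP Hvb].
  exists v, a, b; split => //; first exact: (allP Hvt).
  by rewrite Hva Hvb. by rewrite Hvb Habc.
move=> Hno.
set C' := filter (fun x => x != c) C.
apply: (IH C' u).
- rewrite size_filter.
  have := count_predC (fun x => x != c) C.
  have : 0 < count (predC (fun x => x != c)) C.
    rewrite -has_count; apply/hasP; exists c => //=; by rewrite eqxx.
  move: HC; lia.
- rewrite /u; apply: sorted_filter; first exact: ltn_trans.
  exact: path_sorted Hp.
- rewrite size_filter; have := Rb_gt0 k; move: Hc; lia.
- move=> a b Ha Hb Hab; rewrite mem_filter.
  move: (Hu a Ha) (Hu b Hb) => /andP[Hat _] /andP[Hbt _].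
  rewrite Hcol ?in_cons ?Hat ?Hbt ?orbT // andbT.
  apply/eqP => E; apply: Hno; by exists a, b.
Qed.

Local Open Scope ring_scope.

Lemma sig_eq (T : Type) (P : T -> bool) (x y : {z | P z}) : proj1_sig x = proj1_sig y -> x = y.
Proof. case: x => x Hx; case: y => y Hy /= E; subst; congr exist; exact: bool_irrelevance. Qed.
Arguments sig_eq {T P x y}.

Lemma inj_nat (I : Type) : infinite_set [set: I] -> exists g : nat -> I, injective g.
Proof.
move=> /infiniteP/card_leP [f].
exists (fun k => proj1_sig (f (exist _ k (mem_set (Logic.I : [set: nat] k))))).
move=> a b /= H.
move: (sig_eq H) => /(@inj _ _ _ f _ _ (in_setT _) (in_setT _)).
by case.
Qed.

Lemma natf (I : Type) (N : nat) k (i : I) : ((k%:R : prodZ I N) i) = k%:R.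
Proof. elim: k => // k IH. rewrite !mulrS -IH. done. Qed.

Lemma Zeq0 (N k : nat) : (1 < N)%N -> ((k%:R : 'Z_N) = 0 <-> (N %| k)%N).
Proof.
move=> HN; split.
  by move=> H; have := val_Zp_nat HN k; rewrite H /dvdn => <-.
by move=> Hd; rewrite -(Zp_nat_mod HN) (eqP Hd).
Qed.

Lemma Zmul0 (n p : nat) (x y : 'Z_(n * p ^ 2)) : (0 < n)%N -> prime p ->
  x * p%:R = 0 -> y * p%:R = 0 -> x * y = 0.
Proof.
move=> Hn Hp; have Hp1 := prime_gt1 Hp.
have HN : (1 < n * p ^ 2)%N.
  have : (p <= p ^ 2)%N by rewrite expnS leq_pmulr // expn_gt0 ltnW.
  have : (p <= n * p ^ 2)%N. rewrite (leq_trans _ (leq_pmull _ Hn)) //.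
    by rewrite expnS leq_pmulr // expn_gt0 ltnW.
  lia.
rewrite -[x]natr_Zp -[y]natr_Zp -!natrM !Zeq0 //.
move: (nat_of_ord x) (nat_of_ord y) => x' y'.
rewrite expnS expn1 mulnA => Hx Hy.
have Hx' : (n * p %| x')%N by rewrite -(dvdn_pmul2r (ltnW Hp1)).
have Hy' : (n * p %| y')%N by rewrite -(dvdn_pmul2r (ltnW Hp1)).
rewrite (dvdn_trans _ (dvdn_mul Hx' Hy')) //.
by rewrite dvdn_mul // dvdn_mull.
Qed.

Definition Amat (I : Type) (N p : nat) : 'M[prodZ I N]_(3,3) :=
  \matrix_(i < 3, j < 3) (if (i == 0 :> nat) then (if (j == 1 :> nat) then -1 else 1)
     else if (i == j :> nat) then p%:R else 0).

Lemma sum_entry (I : Type) (N p : nat) (P : pred 'I_3) (k : 'I_3) (w : 'I_3 -> prodZ I N) :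
  (\sum_(i | P i) w i *: col i (Amat I N p)) k ord0 =
  \sum_(i < 3) (if P i then w i * Amat I N p k i else 0).
Proof.
rewrite summxE big_mkcond /=; apply: eq_bigr => i _.
by case: (P i); rewrite ?mxE.
Qed.

Lemma sum_entry1 (I : Type) (N p : nat) (P : pred 'I_3) (k : 'I_3) :
  (\sum_(i | P i) col i (Amat I N p)) k ord0 =
  \sum_(i < 3) (if P i then Amat I N p k i else 0).
Proof.
rewrite summxE big_mkcond /=; apply: eq_bigr => i _.
by case: (P i); rewrite ?mxE.
Qed.

Definition i0 : 'I_3 := @Ordinal 3 0 isT.
Definition i1 : 'I_3 := @Ordinal 3 1 isT.
Definition i2 : 'I_3 := @Ordinal 3 2 isT.

Lemma expand3 (T : nmodType) (F : 'I_3 -> T) : \sum_(i < 3) F i = F i0 + F i1 + F i2.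
Proof.
rewrite !big_ord_recl big_ord0 addr0 addrA.
have -> : lift ord0 (lift ord0 ord0) = i2 :> 'I_3 by apply: val_inj.
have -> : lift ord0 ord0 = i1 :> 'I_3 by apply: val_inj.
by have -> : ord0 = i0 :> 'I_3 by apply: val_inj.
Qed.

Lemma rowsW (I : Type) (N p : nat) (P : pred 'I_3) (w : 'I_3 -> prodZ I N) :
  [/\ (\sum_(i | P i) w i *: col i (Amat I N p)) i0 ord0 =
      (if P i0 then w i0 else 0) + (if P i1 then - w i1 else 0) + (if P i2 then w i2 else 0),
      (\sum_(i | P i) w i *: col i (Amat I N p)) i1 ord0 =
      (if P i1 then w i1 * p%:R else 0) &
      (\sum_(i | P i) w i *: col i (Amat I N p)) i2 ord0 =
      (if P i2 then w i2 * p%:R else 0)].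
Proof.
rewrite !sum_entry !expand3 !mxE /=.
by split; case: (P i0); case: (P i1); case: (P i2);
  rewrite ?mulr1 ?mulrN1 ?mulr0 ?addr0 ?add0r.
Qed.

Lemma rows1 (I : Type) (N p : nat) (P : pred 'I_3) :
  [/\ (\sum_(i | P i) col i (Amat I N p)) i0 ord0 =
      (if P i0 then 1 else 0) + (if P i1 then - 1 else 0) + (if P i2 then 1 else 0),
      (\sum_(i | P i) col i (Amat I N p)) i1 ord0 =
      (if P i1 then p%:R else 0) &
      (\sum_(i | P i) col i (Amat I N p)) i2 ord0 =
      (if P i2 then p%:R else 0)].
Proof.
rewrite !sum_entry1 !expand3 !mxE /=.
by split; case: (P i0); case: (P i1); case: (P i2);
  rewrite ?mulr1 ?mulrN1 ?mulr0 ?addr0 ?add0r.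
Qed.

Lemma funp (I : Type) (N : nat) (d : prodZ I N) (k : nat) :
  d * k%:R = 0 -> forall i, d i * k%:R = 0.
Proof. move=> H i; have := congr1 (fun g => g i) H. change ((d i * (k%:R : prodZ I N) i) = 0 -> d i * k%:R = 0). by rewrite natf. Qed.

Lemma not_gcc (n p : nat) (I : Type) : (0 < n)%N -> prime p ->
  ~ gen_columns_condition (Amat I (n * p ^ 2) p).
Proof.
move=> Hn Hp [m [f [d [Hsurj Hdn0 H0 Ht Hinf]]]].
set N := (n * p ^ 2)%N in f d Hsurj Hdn0 H0 Ht Hinf *.
have Hj3 : forall j : 'I_3, j = i0 \/ j = i1 \/ j = i2.
  by case=> [[|[|[|j]]] Hj'] //=; [left|right;left|right;right]; apply: val_inj.
have [E0 E1 E2] := rows1 I N p (fun i => f i == ord0).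
have e0 := congr1 (fun M : 'cV[prodZ I N]_3 => M i0 ord0) H0.
have e1 := congr1 (fun M : 'cV[prodZ I N]_3 => M i1 ord0) H0.
have e2 := congr1 (fun M : 'cV[prodZ I N]_3 => M i2 ord0) H0.
rewrite /= !mxE ?E0 ?E1 ?E2 in e0 e1 e2.
have Hd0p : d ord0 * p%:R = 0.
  have [j Hj] := Hsurj ord0.
  have Hdz := Hdn0 ord0.
  move: e0 e1 e2; case H1: (f i1 == ord0); first by move=> _ ->.
  case H2: (f i2 == ord0); first by move=> _ _ ->.
  case H0': (f i0 == ord0); last first.
    exfalso; move: Hj; case: (Hj3 j) => [->|[->|->]] => Hj;
      [move: H0'|move: H1|move: H2]; rewrite Hj eqxx //.
  rewrite !addr0 mulr1 => E _ _.
  by move: Hdz; rewrite E eqxx.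
case: (posnP m) => Hm.
  subst m; move: e0; have F : forall j, f j == ord0 by move=> j; apply/eqP/val_inj; case: (f j) => [[]].
  rewrite !F addrNK mulr1 => E; by move: (Hdn0 ord0); rewrite E eqxx.
pose t1 : 'I_m.+1 := @Ordinal m.+1 1 Hm.
have [a Ha] := Ht t1 isT.
have [E0' E1' E2'] := rows1 I N p (fun i => f i == t1).
have [W0 W1 W2] := rowsW I N p (fun i => (f i < t1)%N) a.
have g0 := congr1 (fun M : 'cV[prodZ I N]_3 => M i0 ord0) Ha.
have g1 := congr1 (fun M : 'cV[prodZ I N]_3 => M i1 ord0) Ha.
have g2 := congr1 (fun M : 'cV[prodZ I N]_3 => M i2 ord0) Ha.
rewrite /= !mxE ?E0' ?E1' ?E2' ?W0 ?W1 ?W2 in g0 g1 g2.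
have CB : forall j, f j == t1 -> (f j < t1)%N = false by move=> j /eqP ->; rewrite ltnn.
have Hd1p : d t1 * p%:R = 0.
  have [j Hj] := Hsurj t1.
  move: g0 g1 g2; case C1: (f i1 == t1).
    by rewrite (CB _ C1) => _ H _; exact: H.
  case C2: (f i2 == t1).
    by rewrite (CB _ C2) => _ _ H; exact: H.
  case C0: (f i0 == t1); last first.
    exfalso; move: Hj; case: (Hj3 j) => [->|[->|->]] => Hj;
      [move: C0|move: C1|move: C2]; rewrite Hj eqxx //.
  rewrite (CB _ C0) !mulr0 !addr0 mulr1 add0r.
  case: (f i1 < t1)%N; case: (f i2 < t1)%N; rewrite ?add0r ?addr0 => ->.
  - by move=> H1 H2; rewrite mulrDl mulNr -H1 -H2 oppr0 addr0.
  - by move=> H1 _; rewrite mulNr -H1 oppr0.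
  - by move=> _ H2; rewrite -H2.
  - by move=> _ _; rewrite mul0r.
have Hd01 : d ord0 * d t1 = 0.
  apply/funext => i; change (d ord0 i * d t1 i = 0).
  exact: (@Zmul0 n p _ _ Hn Hp (@funp _ _ _ _ Hd0p i) (@funp _ _ _ _ Hd1p i)).
apply: (Hinf Hm 1%N).
apply: (sub_finite_set _ (finite_set1 (0 : prodZ I N))).
move=> _ [r _ <-] /=.
rewrite expr1 (bigD1 t1) //= mulrA Hd01 !mul0r //.
Qed.

Lemma pr_A (n p : nat) (I : Type) : (0 < n)%N -> prime p -> infinite_set [set: I] ->
  partition_regular (Amat I (n * p ^ 2) p).
Proof.
move=> Hn Hp Hinf r Hr chi.
have [g ginj] := @inj_nat I Hinf.
set N := (n * p ^ 2)%N in chi *.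
have Hp1 := prime_gt1 Hp.
have HN : (1 < N)%N.
  have : (p <= n * p ^ 2)%N. rewrite (leq_trans _ (leq_pmull _ Hn)) //.
    by rewrite expnS leq_pmulr // expn_gt0 ltnW.
  rewrite /N; lia.
pose q : 'Z_N := (n * p)%:R.
pose u (a : nat) : prodZ I N := fun i => if pselect (i = g a) then q else 0.
pose y a b := u a - u b.
pose col a b := nat_of_ord (chi (y a b)).
have Hj3 : forall j : 'I_3, j = i0 \/ j = i1 \/ j = i2.
  by case=> [[|[|[|j]]] Hj'] //=; [left|right;left|right;right]; apply: val_inj.
have [a [b [c [Hab Hbc E1 E2]]]] : exists a b c, [/\ (a < b)%N, (b < c)%N, col a b = col a c & col a c = col b c].
  apply: (@ramsey col r (iota 0 r) (iota 0 (Rb r))).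
  - by rewrite size_iota.
  - exact: iota_ltn_sorted.
  - by rewrite size_iota.
  - by move=> a' b' _ _ _; rewrite mem_iota /col ltn_ord.
have Hq : q != 0.
  rewrite /q; apply/eqP => /(@Zeq0 _ _ HN); rewrite /N expnS expn1 mulnA.
  move=> /dvdn_leq; rewrite muln_gt0 Hn (ltnW Hp1) => /(_ isT).
  move: Hn Hp1; nia.
have Hpu : forall a, p%:R * u a = 0.
  move=> a'; apply/funext => i; change ((p%:R : prodZ I N) i * u a' i = 0).
  rewrite natf /u; case: (pselect (i = g a')) => _ /=; last by rewrite mulr0.
  rewrite /q -natrM; apply/(@Zeq0 _ _ HN); rewrite /N expnS expn1 mulnA.
  by rewrite mulnC mulnA dvdnn.
pose x : 'cV[prodZ I N]_3 := \col_(k < 3) (if (k == 0 :> nat) then y a b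
  else if (k == 1 :> nat) then y a c else y b c).
exists x; split.
- apply/eqP => /(congr1 (fun M : 'cV[prodZ I N]_3 => M i0 ord0 (g a))).
  rewrite !mxE /=; change (u a (g a) - u b (g a) = 0 -> False); rewrite /u.
  case: (pselect (g a = g a)) => [_|] /=; last by [].
  case: (pselect (g a = g b)) => [/ginj E|_] /=; first by move: Hab; rewrite E ltnn.
  by rewrite subr0 => E; move: Hq; rewrite E eqxx.
- apply/matrixP => k j; rewrite !mxE expand3 !mxE.
  case: (Hj3 k) => [->|[->|->]]; rewrite /=.
  + rewrite mul1r mulN1r mul1r /y; ring.
  + by rewrite !mul0r add0r addr0 /y mulrBr !Hpu subrr.
  + by rewrite !mul0r !add0r /y mulrBr !Hpu subrr.
- exists (chi (y a b)) => k; rewrite mxE.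
  case: (Hj3 k) => [->|[->|->]] /=; first by [].
  + by apply: val_inj; exact: (esym E1).
  + by apply: val_inj; exact: (esym (etrans E1 E2)).
Qed.

Theorem corollary4p7 (n p : nat) (I : Type) :
  (0 < n)%N -> prime p -> infinite_set [set: I] ->
  exists A : 'M[prodZ I (n * p ^ 2)]_(3, 3),
    partition_regular A /\ ~ gen_columns_condition A.
Proof.
move=> Hn Hp Hinf; exists (Amat I (n * p ^ 2) p); split.
- exact: pr_A.
- exact: not_gcc.
Qed.
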